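(* Let $h\in\mathcal H$ and $\varphi(\underline{x})=h(x_0,x_1)$ on $X=[0,1]^{\mathbb N_0}$. If $\underline{x}\in\Omega_\varphi$ is periodic under $\sigma$, then $\underline{x}=a^\infty$ for some $a\in\mathrm{m}_h$.
   Context: $X=[0,1]^{\mathbb N_0}$ with metric $d_X(\underline{x},\underline{y})=\sum_{i\ge0}|x_i-y_i|/2^{i+1}$ and shift $\sigma(\underline{x})_i=x_{i+1}$. $\alpha_\varphi=\inf_\mu\int\varphi\,d\mu$ over $\sigma$-invariant Borel probability measures. $B(\underline{x},\underline{y},n;\varepsilon)=\{\underline{z}: d_X(\underline{x},\underline{z})<\varepsilon,\ d_X(\sigma^n\underline{z},\underline{y})<\varepsilon\}$; Mañé potential $S_\varphi(\underline{x},\underline{y})=\lim_{\varepsilon\to0}\inf\{\sum_{i=0}^{n-1}(\varphi(\sigma^i\underline{z})-\alpha_\varphi): n\in\mathbb N,\ \underline{z}\in B(\underline{x},\underline{y},n;\varepsilon)\}$; Aubry set $\Omega_\varphi=\{\underline{x}: S_\varphi(\underline{x},\underline{x})=0\}$. $h^*=\min_x h(x,x)$, $\mathrm{m}_h=\{a: h(a,a)=h^*\}$, $a^\infty=aaa\ldots$. A finite sequence $(x_k,\dots,x_l)$ in $[0,1]$ is minimal (for $h$) if $\sum_{i=k}^{l-1}h(x_i,x_{i+1})\le\sum_{i=k}^{l-1}h(y_i,y_{i+1})$ for every $(y_k,\dots,y_l)$ in $[0,1]$ with $y_k=x_k$, $y_l=x_l$. $\mathcal H$ is the set of Lipschitz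 $h:[0,1]^2\to\mathbb R$ such that (H3) if $\xi_1<\xi_2$ and $\eta_1<\eta_2$ then $h(\xi_1,\eta_1)+h(\xi_2,\eta_2)<h(\xi_1,\eta_2)+h(\xi_2,\eta_1)$; and (H4) if $(x_{-1},x_0,x_1)\ne(x'_{-1},x_0,x'_1)$ are both minimal then $(x_{-1}-x'_{-1})(x_1-x'_1)<0$. (It is known that $\alpha_\varphi=h^*$ in this setting.) *)

(* Defs.v *)
From HB Require Import structures.
From mathcomp Require Import all_boot all_order all_algebra.
From mathcomp Require Import all_classical all_reals all_analysis.
Set Implicit Arguments. Unset Strict Implicit. Unset Printing Implicit Defensive.
Import Order.TTheory GRing.Theory Num.Theory.
Import numFieldNormedType.Exports.
Local Open Scope classical_set_scope.
Local Open Scope ring_scope.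

Section Defs.
Variable R : realType.

Definition Xset : set (nat -> R) := [set x | forall i, 0 <= x i <= 1].

Definition shift (x : nat -> R) : nat -> R := fun i => x i.+1.

Definition dX (x y : nat -> R) : R :=
  limn (fun n => \sum_(0 <= i < n) (`|x i - y i| / 2 ^+ i.+1)).

Definition phi_of (h : R -> R -> R) (x : nat -> R) : R := h (x 0%N) (x 1%N).

(* Borel sigma-algebra of the product topology: generated by the coordinate maps *)
Definition cyl_gen : set (set (nat -> R)) :=
  [set A | exists (i : nat) (B : set R), measurable B /\ A = (fun x => x i) @^-1` B].

Definition cylT := g_sigma_algebraType cyl_gen.

Definition invariant_prob (mu : probability cylT R) : Prop :=
  mu (Xset : set cylT) = 1%E /\
  forall A : set cylT, measurable A -> mu ((shift : cylT -> cylT) @^-1` A) = mu A.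

Definition alpha (h : R -> R -> R) : \bar R :=
  ereal_inf [set (\int[mu]_(x in (Xset : set cylT)) (phi_of h x)%:E)%E
            | mu in [set mu : probability cylT R | invariant_prob mu]].

Definition Bset (x y : nat -> R) (n : nat) (eps : R) : set (nat -> R) :=
  [set z | Xset z /\ dX x z < eps /\ dX (iter n shift z) y < eps].

Definition mane_inf (h : R -> R -> R) (x y : nat -> R) (eps : R) : \bar R :=
  ereal_inf [set s | exists (n : nat) (z : nat -> R), (0 < n)%N /\ Bset x y n eps z /\
     s = (\sum_(0 <= i < n) ((phi_of h (iter i shift z))%:E - alpha h))%E].

Definition mane (h : R -> R -> R) (x y : nat -> R) : \bar R :=
  lim (mane_inf h x y @ 0^'+).

Definition aubry (h : R -> R -> R) : set (nat -> R) :=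
  [set x | Xset x /\ mane h x x = 0%E].

Definition hstar (h : R -> R -> R) : R := inf [set h a a | a in [set a : R | 0 <= a <= 1]].

Definition m_h (h : R -> R -> R) : set R :=
  [set a | 0 <= a <= 1 /\ h a a = hstar h].

Definition minimal (h : R -> R -> R) (x : nat -> R) (k l : nat) : Prop :=
  (forall i, (k <= i <= l)%N -> 0 <= x i <= 1) /\
  forall y : nat -> R, (forall i, (k <= i <= l)%N -> 0 <= y i <= 1) ->
    y k = x k -> y l = x l ->
    \sum_(k <= i < l) h (x i) (x i.+1) <= \sum_(k <= i < l) h (y i) (y i.+1).

Definition triple (a b c : R) : nat -> R :=
  fun i => match i with 0%N => a | 1%N => b | _ => c end.

Definition in01 (a : R) : Prop := 0 <= a <= 1.

Definition lipschitz2 (h : R -> R -> R) : Prop :=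
  exists L : R, forall a b c d, in01 a -> in01 b -> in01 c -> in01 d ->
    `|h a b - h c d| <= L * (`|a - c| + `|b - d|).

Definition H3 (h : R -> R -> R) : Prop :=
  forall x1 x2 y1 y2, in01 x1 -> in01 x2 -> in01 y1 -> in01 y2 ->
    x1 < x2 -> y1 < y2 -> h x1 y1 + h x2 y2 < h x1 y2 + h x2 y1.

(* (x_{-1}, x_0, x_1) is encoded as triple x_{-1} x_0 x_1 on indices 0,1,2 *)
Definition H4 (h : R -> R -> R) : Prop :=
  forall am x0 ap am' ap',
    minimal h (triple am x0 ap) 0 2 -> minimal h (triple am' x0 ap') 0 2 ->
    (am, ap) <> (am', ap') -> (am - am') * (ap - ap') < 0.

Definition classH (h : R -> R -> R) : Prop := lipschitz2 h /\ H3 h /\ H4 h.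

Definition shift_periodic (x : nat -> R) : Prop := exists p : nat, (0 < p)%N /\ iter p shift x = x.

End Defs.

(* Main.v *)
Require Import Defs.
From HB Require Import structures.
From mathcomp Require Import all_boot all_order all_algebra.
From mathcomp Require Import all_classical all_reals all_analysis.
From mathcomp Require Import ring lra zify.
Set Implicit Arguments. Unset Strict Implicit. Unset Printing Implicit Defensive.
Import Order.TTheory GRing.Theory Num.Theory.
Import numFieldNormedType.Exports.
Local Open Scope classical_set_scope.
Local Open Scope ring_scope.

Section PartA.
Variable R : realType.

Definition psum (x y : nat -> R) (N : nat) : R :=
  \sum_(0 <= i < N) (`|x i - y i| / 2 ^+ i.+1).

Lemma geo_id (K N : nat) :
  \sum_(0 <= i < N) (if (K <= i)%N then 1 / 2 ^+ i.+1 else 0 : R)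
   + 1 / 2 ^+ (maxn N K) = 1 / 2 ^+ K.
Proof.
elim: N => [|N IH]; first by rewrite big_geq // add0r max0n.
rewrite big_nat_recr //=.
case: (leqP K N) => hKN.
  rewrite (maxn_idPl hKN) in IH.
  have -> : maxn N.+1 K = N.+1 by apply/maxn_idPl; exact: leqW.
  by rewrite -IH exprS; field; rewrite expf_neq0.
have -> : maxn N.+1 K = K by apply/maxn_idPr.
have e : maxn N K = K by apply/maxn_idPr; exact: ltnW.
by rewrite e in IH; rewrite addr0.
Qed.

Lemma psum_le (x y : nat -> R) K N : Xset x -> Xset y ->
  (forall i, (i < K)%N -> x i = y i) -> psum x y N <= 1 / 2 ^+ K.
Proof.
move=> hx hy hxy; rewrite -(geo_id K N) /psum.
apply: le_trans (_ : _ <= \sum_(0 <= i < N) (if (K <= i)%N then 1 / 2 ^+ i.+1 else 0 : R)) _.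
  apply: ler_sum => i _; case: leqP => hi.
    apply: ler_wpM2r; first by rewrite invr_ge0 exprn_ge0.
    have := hx i; have := hy i; rewrite ler_norml; move=> /andP[? ?] /andP[? ?].
    apply/andP; split; lra.
  by rewrite hxy // subrr normr0 mul0r.
by rewrite lerDl divr_ge0 // exprn_ge0.
Qed.

Lemma psum_nd (x y : nat -> R) : nondecreasing_seq (psum x y).
Proof.
apply/nondecreasing_seqP => n; rewrite /psum big_nat_recr //= lerDl.
by rewrite divr_ge0 // exprn_ge0.
Qed.

Lemma psum_cvg (x y : nat -> R) : Xset x -> Xset y -> cvgn (psum x y).
Proof.
move=> hx hy; apply/cvg_ex; eexists; apply: nondecreasing_cvgn; first exact: psum_nd.
exists 1 => _ [n _ <-]; have := psum_le n hx hy (K:=0) (fun i (hi : (i < 0)%N) => False_ind _ (notF hi)).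
by rewrite expr0 divr1.
Qed.

Lemma dX_ge (x y : nat -> R) i : Xset x -> Xset y ->
  `|x i - y i| <= 2 ^+ i.+1 * dX x y.
Proof.
move=> hx hy; rewrite -ler_pdivrMl ?exprn_gt0 // mulrC.
apply: le_trans (_ : _ <= psum x y i.+1) _.
  rewrite /psum big_nat_recr //= lerDr; apply: sumr_ge0 => k _.
  by rewrite divr_ge0 // exprn_ge0.
by apply: nondecreasing_cvgn_le; [exact: psum_nd| exact: psum_cvg].
Qed.

Lemma dX_le (x y : nat -> R) K : Xset x -> Xset y ->
  (forall i, (i < K)%N -> x i = y i) -> dX x y <= 1 / 2 ^+ K.
Proof.
move=> hx hy hxy; apply: limr_le; first exact: psum_cvg.
by apply: nearW => n; exact: psum_le.
Qed.

Lemma dX_ge0 (x y : nat -> R) : Xset x -> Xset y -> 0 <= dX x y.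
Proof.
move=> hx hy; apply: limr_ge; first exact: psum_cvg.
apply: nearW => n; apply: sumr_ge0 => k _; by rewrite divr_ge0 // exprn_ge0.
Qed.

Lemma dX_refl (x : nat -> R) : dX x x = 0.
Proof.
rewrite /dX (_ : (fun n => _) = fun _ => 0); first exact: lim_cst.
by apply/funext => n; apply: big1 => i _; rewrite subrr normr0 mul0r.
Qed.

End PartA.

Section PartB.
Variable R : realType.
Implicit Types g : R -> R -> R.

Definition DD g (x1 x2 y1 y2 : R) := g x1 y2 + g x2 y1 - g x1 y1 - g x2 y2.
Definition FF g (m a b : R) := DD g (Num.min a m) m m (Num.max b m).

Lemma DD_ge0 g x1 x2 y1 y2 : H3 g -> in01 x1 -> in01 x2 -> in01 y1 -> in01 y2 ->
  x1 <= x2 -> y1 <= y2 -> 0 <= DD g x1 x2 y1 y2.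
Proof.
move=> H a b c d; rewrite le_eqVlt => /orP[/eqP->|lx].
  by move=> _; rewrite /DD; lra.
rewrite le_eqVlt => /orP[/eqP->|ly]; first by rewrite /DD; lra.
have := H _ _ _ _ a b c d lx ly; rewrite /DD; lra.
Qed.

Lemma in01_min (a b : R) : in01 a -> in01 b -> in01 (Num.min a b).
Proof. by move=> ha hb; case: leP. Qed.
Lemma in01_max (a b : R) : in01 a -> in01 b -> in01 (Num.max a b).
Proof. by move=> ha hb; case: leP. Qed.

Lemma FF_ge0 g m a b : H3 g -> in01 m -> in01 a -> in01 b -> 0 <= FF g m a b.
Proof.
move=> H hm ha hb; apply: DD_ge0 => //; try exact: in01_min; try exact: in01_max.
  by rewrite ge_min lexx orbT.
by rewrite le_max lexx orbT.
Qed.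

Lemma FF_diag g m a : FF g m a a = 0.
Proof.
by rewrite /FF /DD; case: (leP a m) => h; ring.
Qed.

Lemma FF_step g m p M s : H3 g -> in01 m -> in01 p -> in01 M -> in01 s ->
  p <= M -> s <= M ->
  FF g m p M + FF g m M s <= DD g p M s M + FF g m p s.
Proof.
move=> H hm hp hM hs pM sM.
have d1 := DD_ge0 H hp hM hs hM pM sM.
rewrite /FF.
case: (leP M m) => hMm.
  have sm : s <= m by apply: le_trans hMm.
  rewrite ?(max_r sm) ?(min_l hMm); rewrite /DD in d1 *; case: (leP p m) => hpm; lra.
have mM := ltW hMm; rewrite ?(max_l mM) ?(min_r mM).
case: (leP m p) => hpm.
  rewrite ?(min_r hpm); case: (leP s m) => hsm; rewrite /DD in d1 *; lra.
rewrite ?(min_l (ltW hpm)).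
have d2 := DD_ge0 H hm hM hs hM mM sM.
case: (leP s m) => hsm.
  have d3 := DD_ge0 H hp hm hs hm (ltW hpm) hsm.
  rewrite /DD in d1 d2 d3 *; lra.
rewrite /DD in d1 d2 *; lra.
Qed.

Lemma per_add (c : nat -> R) n : (forall k, c (k + n)%N = c k) ->
  forall q r, c (r + q * n)%N = c r.
Proof.
move=> hp; elim=> [|q IH] r; first by rewrite mul0n addn0.
by rewrite mulSn addnA IH hp.
Qed.

Lemma per_mod (c : nat -> R) n : (forall k, c (k + n)%N = c k) ->
  forall k, c k = c (k %% n)%N.
Proof.
move=> hp k; rewrite {1}(divn_eq k n) addnC; exact: per_add.
Qed.

Lemma shift_sum1 (f : nat -> R) n : f n = f 0%N ->
  \sum_(0 <= k < n) f k.+1 = \sum_(0 <= k < n) f k.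
Proof.
case: n => [|n] hf; first by rewrite !big_geq.
by rewrite big_nat_recr //= hf big_nat_recl //= addrC.
Qed.


Lemma shift_sum (f : nat -> R) n : (forall k, f (k + n)%N = f k) ->
  forall t, \sum_(0 <= k < n) f (k + t)%N = \sum_(0 <= k < n) f k.
Proof.
move=> hp; elim=> [|t IH]; first by apply: eq_bigr => k _; rewrite addn0.
rewrite -IH -(shift_sum1 (f := fun k => f (k + t)%N)).
  by apply: eq_bigr => k _; rewrite addnS addSn.
by rewrite add0n addnC hp.
Qed.

Lemma argmax_ex (c : nat -> R) n : exists t, (t <= n)%N /\ forall k, (k <= n)%N -> c k <= c t.
Proof.
elim: n => [|n [t [ht hmax]]]; first by exists 0%N; split => // k; rewrite leqn0 => /eqP->.
case: (leP (c n.+1) (c t)) => h.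
  exists t; split; first exact: leqW.
  move=> k; rewrite leq_eqVlt => /orP[/eqP->//|]; rewrite ltnS; exact: hmax.
exists n.+1; split => // k; rewrite leq_eqVlt => /orP[/eqP->//|]; rewrite ltnS => hk.
exact: le_trans (hmax _ hk) (ltW h).
Qed.

Lemma cycle_ineq g m : H3 g -> in01 m -> forall n, (0 < n)%N ->
  forall c : nat -> R, (forall k, in01 (c k)) -> (forall k, c (k + n)%N = c k) ->
  \sum_(0 <= k < n) (g (c k) (c k) + FF g m (c k) (c k.+1))
    <= \sum_(0 <= k < n) g (c k) (c k.+1).
Proof.
move=> H hm; elim=> [//|n IH] _ c c01 cper.
case: n IH cper => [|n] IH cper.
  have e : c 1%N = c 0%N by rewrite -(cper 0%N).
  by rewrite !big_nat1 e FF_diag addr0.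
have [t [ht hmax]] := argmax_ex c n.+1.
have hmaxall : forall k, c k <= c t.
  move=> k; rewrite (per_mod cper k); apply: hmax; rewrite -ltnS; exact: ltn_pmod.
set c' := fun k => c (k + t.+1)%N.
have c'per : forall k, c' (k + n.+2)%N = c' k.
  by move=> k; rewrite /c' addnAC cper.
have eqL : \sum_(0 <= k < n.+2) g (c k) (c k.+1) = \sum_(0 <= k < n.+2) g (c' k) (c' k.+1).
  have per : forall k, (fun k => g (c k) (c k.+1)) (k + n.+2)%N = (fun k => g (c k) (c k.+1)) k.
    by move=> k /=; rewrite -addSn !cper.
  rewrite /c' -(shift_sum per t.+1).
  by apply: eq_bigr => k _; rewrite addSn.
have eqR : \sum_(0 <= k < n.+2) (g (c k) (c k) + FF g m (c k) (c k.+1)) =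
    \sum_(0 <= k < n.+2) (g (c' k) (c' k) + FF g m (c' k) (c' k.+1)).
  have per : forall k, (fun k => (g (c k) (c k) + FF g m (c k) (c k.+1))) (k + n.+2)%N = (fun k => (g (c k) (c k) + FF g m (c k) (c k.+1))) k.
    by move=> k /=; rewrite -addSn !cper.
  rewrite /c' -(shift_sum per t.+1).
  by apply: eq_bigr => k _; rewrite addSn.
rewrite eqL eqR.
set d := fun k => c' (k %% n.+1)%N.
have dper : forall k, d (k + n.+1)%N = d k by move=> k; rewrite /d modnDr.
have d01 : forall k, in01 (d k) by move=> k; exact: c01.
have := IH isT d d01 dper.
rewrite !big_nat_recr //=.
have eqd : forall k, (k < n)%N -> d k = c' k /\ d k.+1 = c' k.+1.
  by move=> k hk; rewrite /d !modn_small //; lia.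
rewrite (eq_big_nat _ _ (F1 := fun k => g (d k) (d k.+1))
   (F2 := fun k => g (c' k) (c' k.+1))); last first.
  by move=> k /andP[_ hk]; have [-> ->] := eqd k hk.
rewrite (eq_big_nat _ _ (F1 := fun k => g (d k) (d k) + FF g m (d k) (d k.+1))
   (F2 := fun k => g (c' k) (c' k) + FF g m (c' k) (c' k.+1))); last first.
  by move=> k /andP[_ hk]; have [-> ->] := eqd k hk.
have dn : d n = c' n by rewrite /d modn_small.
have dn1 : d n.+1 = c' 0%N by rewrite /d modnn.
have c'n2 : c' n.+2 = c' 0%N by rewrite -(c'per 0%N).
rewrite dn dn1 c'n2.
have hM : c' n.+1 = c t by rewrite /c' addnS -addSn addnC cper.
have step := @FF_step g m (c' n) (c t) (c' 0%N) H hm (c01 _) (c01 _) (c01 _) (hmaxall _) (hmaxall _).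
rewrite hM; rewrite /DD in step; lra.
Qed.

End PartB.
Section PartC.
Variable R : realType.
Implicit Types h : R -> R -> R.

Lemma iter_shift (z : nat -> R) n : iter n (@Defs.shift R) z = fun k => z (k + n)%N.
Proof.
elim: n => [|n IH] /=; first by apply/funext => k; rewrite addn0.
by rewrite IH; apply/funext => k; rewrite /Defs.shift addSnnS.
Qed.

Lemma Xset_iter (z : nat -> R) n : Xset z -> Xset (iter n (@Defs.shift R) z).
Proof. by rewrite iter_shift => hz k; exact: hz. Qed.

Lemma mane_inf_noninc h x y (e1 e2 : R) : e1 <= e2 -> (mane_inf h x y e2 <= mane_inf h x y e1)%E.
Proof.
move=> le12; apply: ereal_inf_le_tmp => s [n [z [hn [[hz [h1 h2]] ->]]]].
exists n, z; split => //; split => //.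
split => //; split; [exact: (lt_le_trans h1 le12)|exact: (lt_le_trans h2 le12)].
Qed.

Lemma mane_cvg h x y : cvg (mane_inf h x y @ 0^'+).
Proof.
apply: nonincreasing_at_right_is_cvge; apply: nearW => b.
move=> e1 e2 _ _; exact: mane_inf_noninc.
Qed.


Lemma elem_fin h (r : R) n (z : nat -> R) : alpha h = r%:E ->
  (\sum_(0 <= i < n) ((phi_of h (iter i (@Defs.shift R) z))%:E - alpha h))%E
  = (\sum_(0 <= i < n) (h (z i) (z i.+1) - r))%:E.
Proof.
move=> ->; rewrite -sumEFin; apply: eq_bigr => i _.
by rewrite iter_shift /phi_of add0n add1n.
Qed.

Lemma window h (z : nat -> R) n j : (0 < n)%N ->
 \sum_(0 <= i < n) h (z i) (z i.+1) =
   \sum_(0 <= k < n) h (z (j + k %% n)%N) (z (j + k.+1 %% n)%N)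
   + (\sum_(0 <= i < j) h (z i) (z i.+1) - \sum_(0 <= i < j) h (z (i + n)%N) (z (i + n).+1))
   + (h (z (j + n.-1)%N) (z (j + n)%N) - h (z (j + n.-1)%N) (z j)).
Proof.
move=> hn.
set f := fun i => h (z i) (z i.+1).
have e1 : \sum_(0 <= i < n + j) f i = \sum_(0 <= i < n) f i + \sum_(0 <= i < j) f (i + n)%N.
  rewrite (big_cat_nat _ (n := n)) //=; last exact: leq_addr.
  have -> : \sum_(n <= i < n + j) f i = \sum_(0 + n <= i < n + j) f i by rewrite add0n.
  by rewrite big_addn addKn.
have e2 : \sum_(0 <= i < n + j) f i = \sum_(0 <= i < j) f i + \sum_(0 <= k < n) f (k + j)%N.
  rewrite (big_cat_nat _ (n := j)) //=; last exact: leq_addl.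
  have -> : \sum_(j <= i < n + j) f i = \sum_(0 + j <= i < n + j) f i by rewrite add0n.
  by rewrite big_addn addnK.
have e3 : \sum_(0 <= k < n) f (k + j)%N = \sum_(0 <= k < n) h (z (j + k %% n)%N) (z (j + k.+1 %% n)%N)
   + (h (z (j + n.-1)%N) (z (j + n)%N) - h (z (j + n.-1)%N) (z j)).
  case: n hn {e1 e2} => [//|n] _ /=.
  rewrite !big_nat_recr //= modnn modn_small // addn0.
  have -> : \sum_(0 <= i < n) f (i + j)%N = \sum_(0 <= k < n) h (z (j + k %% n.+1)%N) (z (j + k.+1 %% n.+1)%N).
    apply: eq_big_nat => k /andP[_ hk]; rewrite !modn_small //; last by lia.
    by rewrite /f addnC addnS.
  rewrite /f (addnC n j) addnS; lra.
have : \sum_(0 <= i < n) f i = \sum_(0 <= i < j) f i + \sum_(0 <= k < n) f (k + j)%N - \sum_(0 <= i < j) f (i + n)%N.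
  by rewrite -e2 e1; lra.
rewrite e3 /f => ->; lra.
Qed.


Lemma cyc_lb h (r : R) (z : nat -> R) n j g (phi : R -> R) m :
  Xset z -> (0 < n)%N -> (forall b, in01 b -> r <= h b b) -> H3 g ->
  (forall u, in01 u -> in01 (phi u)) -> (forall u v, h u v = g (phi u) (phi v)) -> in01 m ->
  (h (z j) (z j) - r) + FF g m (phi (z j)) (phi (z (j + 1 %% n)%N))
   <= \sum_(0 <= k < n) (h (z (j + k %% n)%N) (z (j + k.+1 %% n)%N) - r).
Proof.
move=> hz hn hr H hphi hg hm.
set c := fun k => phi (z (j + k %% n)%N).
have c01 : forall k, in01 (c k) by move=> k; apply: hphi; exact: hz.
have cper : forall k, c (k + n)%N = c k by move=> k; rewrite /c modnDr.
have := cycle_ineq H hm hn c01 cper.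
have eA : \sum_(0 <= k < n) g (c k) (c k.+1) = \sum_(0 <= k < n) h (z (j + k %% n)%N) (z (j + k.+1 %% n)%N).
  by apply: eq_bigr => k _; rewrite hg.
rewrite eA => hcyc.
set b := fun k => g (c k) (c k) + FF g m (c k) (c k.+1).
have hb : forall k, r <= b k.
  move=> k; rewrite /b; have := FF_ge0 (m:=m) (a:=c k) (b:=c k.+1) H hm (c01 _) (c01 _).
  have := hr (z (j + k %% n)%N) (hz _); rewrite hg -/(c k); lra.
have eb0 : b 0%N = h (z j) (z j) + FF g m (phi (z j)) (phi (z (j + 1 %% n)%N)).
  by rewrite /b /c mod0n addn0 hg.
have : b 0%N - r <= \sum_(0 <= k < n) (b k - r).
  move: hn; case En: n => [//|n'] _; rewrite big_nat_recl // lerDl.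
  by apply: sumr_ge0 => k _; rewrite subr_ge0.
rewrite !sumrB in hcyc * => hb0.
rewrite eb0 in hb0; lra.
Qed.


Definition lipH h (L : R) := forall a b c d, in01 a -> in01 b -> in01 c -> in01 d ->
    `|h a b - h c d| <= L * (`|a - c| + `|b - d|).

Lemma err_lb h (L e : R) (z : nat -> R) n j : 0 <= L -> lipH h L -> Xset z ->
  (forall i, (i <= j)%N -> `|z (i + n)%N - z i| <= e) ->
  - (L * (e + e)) *+ j <= \sum_(0 <= i < j) h (z i) (z i.+1) - \sum_(0 <= i < j) h (z (i + n)%N) (z (i + n).+1)
  /\ - (L * e) <= h (z (j + n.-1)%N) (z (j + n)%N) - h (z (j + n.-1)%N) (z j).
Proof.
move=> L0 hL hz he; split.
  rewrite -sumrB.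
  have -> : - (L * (e + e)) *+ j = \sum_(0 <= i < j) (- (L * (e + e))) by rewrite sumr_const_nat subn0.
  apply: ler_sum_nat => i /andP[_ hi].
  have h1 := hL (z i) (z i.+1) (z (i + n)%N) (z (i + n).+1) (hz _) (hz _) (hz _) (hz _).
  have e1 := he i (ltnW hi); have e2 := he i.+1 hi.
  rewrite addSn in e2; rewrite distrC in e1 e2.
  have : L * (`|z i - z (i + n)%N| + `|z i.+1 - z (i + n).+1|) <= L * (e + e).
    by apply: ler_wpM2l => //; apply: lerD => //; rewrite distrC.
  move: h1; rewrite ler_norml => /andP[h1 h2]; lra.
have h1 := hL (z (j + n.-1)%N) (z (j + n)%N) (z (j + n.-1)%N) (z j) (hz _) (hz _) (hz _) (hz _).
rewrite subrr normr0 add0r in h1.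
have e1 := he j (leqnn j).
have : L * `|z (j + n)%N - z j| <= L * e by apply: ler_wpM2l.
move: h1; rewrite ler_norml => /andP[h1 h2]; lra.
Qed.

Lemma H3_refl h : H3 h -> H3 (fun a b => h (1 - a) (1 - b)).
Proof.
move=> H x1 x2 y1 y2 h1 h2 h3 h4 lx ly.
have i01 : forall a : R, in01 a -> in01 (1 - a) by move=> a /andP[? ?]; apply/andP; split; lra.
have := H (1 - x2) (1 - x1) (1 - y2) (1 - y1) (i01 _ h2) (i01 _ h1) (i01 _ h4) (i01 _ h3).
have l1 : 1 - x2 < 1 - x1 by lra.
have l2 : 1 - y2 < 1 - y1 by lra.
move=> /(_ l1 l2); lra.
Qed.

Lemma gap_pos g (u v : R) : H3 g -> in01 u -> in01 v -> u < v ->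
  0 < DD g (u + (v - u) / 4) ((u + v) / 2) ((u + v) / 2) (v - (v - u) / 4).
Proof.
move=> H /andP[u0 u1] /andP[v0 v1] uv.
have i01 : forall a : R, u <= a <= v -> in01 a by move=> a /andP[? ?]; apply/andP; split; lra.
have := H (u + (v - u) / 4) ((u + v) / 2) ((u + v) / 2) (v - (v - u) / 4).
move=> /(_ (i01 _ _) (i01 _ _) (i01 _ _) (i01 _ _)).
rewrite /DD.
have a1 : u <= u + (v - u) / 4 <= v by apply/andP; split; lra.
have a2 : u <= (u + v) / 2 <= v by apply/andP; split; lra.
have a3 : u <= v - (v - u) / 4 <= v by apply/andP; split; lra.
have l1 : u + (v - u) / 4 < (u + v) / 2 by lra.
have l2 : (u + v) / 2 < v - (v - u) / 4 by lra.
move=> /(_ a1 a2 a2 a3 l1 l2); lra.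
Qed.

Lemma gap_mono g (u v c0 c1 : R) : H3 g -> in01 u -> in01 v -> in01 c0 -> in01 c1 -> u < v ->
  `|c0 - u| <= (v - u) / 4 -> `|c1 - v| <= (v - u) / 4 ->
  DD g (u + (v - u) / 4) ((u + v) / 2) ((u + v) / 2) (v - (v - u) / 4)
   <= FF g ((u + v) / 2) c0 c1.
Proof.
move=> H hu hv hc0 hc1 uv; rewrite !ler_norml => /andP[a1 a2] /andP[b1 b2].
move: (hu) (hv) => /andP[u0 u1] /andP[v0 v1].
have i01 : forall a : R, u <= a <= v -> in01 a by move=> a /andP[? ?]; apply/andP; split; lra.
set m := (u + v) / 2; set p := u + (v - u) / 4; set q := v - (v - u) / 4.
have pm : in01 p by apply: i01; apply/andP; rewrite /p; split; lra.
have mm : in01 m by apply: i01; apply/andP; rewrite /m; split; lra.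
have qm : in01 q by apply: i01; apply/andP; rewrite /q; split; lra.
have c0m : c0 <= m by rewrite /m; lra.
have c1m : m <= c1 by rewrite /m; lra.
rewrite /FF (min_l c0m) (max_l c1m).
have cp : c0 <= p by rewrite /p; lra.
have pm' : p <= m by rewrite /p /m; lra.
have qc : q <= c1 by rewrite /q; lra.
have d1 := DD_ge0 H hc0 pm mm hc1 cp c1m.
have d2 := DD_ge0 H pm mm qm hc1 pm' qc.
rewrite /DD in d1 d2 *; lra.
Qed.


Lemma dX_sym (x y : nat -> R) : dX x y = dX y x.
Proof.
have e : (fun N => \sum_(0 <= i < N) (`|x i - y i| / 2 ^+ i.+1)) =
         (fun N => \sum_(0 <= i < N) (`|y i - x i| / 2 ^+ i.+1)).
  by apply/funext => N; apply: eq_bigr => i _; rewrite distrC.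
by rewrite /dX e.
Qed.

Lemma dX_coord (x z : nat -> R) i (eps : R) j : Xset x -> Xset z -> dX x z < eps -> (i <= j.+1)%N ->
  `|z i - x i| <= 2 ^+ j.+2 * eps.
Proof.
move=> hx hz hd hi; rewrite distrC; apply: le_trans (dX_ge i hx hz) _.
have h2 : (2 : R) ^+ i.+1 <= 2 ^+ j.+2 by rewrite ler_eXn2l // ltr1n.
have h0 := dX_ge0 hx hz.
have h3 : 0 <= (2 : R) ^+ i.+1 by rewrite exprn_ge0.
nra.
Qed.

Lemma LB h (L : R) (x : nat -> R) (r : R) j g (phi : R -> R) m (kappa delta0 : R) :
  0 < L -> lipH h L -> Xset x -> alpha h = r%:E -> (forall b, in01 b -> r <= h b b) -> H3 g ->
  (forall u, in01 u -> in01 (phi u)) -> (forall u v, h u v = g (phi u) (phi v)) -> in01 m ->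
  0 < kappa -> 0 < delta0 ->
  (forall (z : nat -> R) n, Xset z -> (0 < n)%N ->
     (forall i, (i <= j.+1)%N -> `|z i - x i| <= delta0 /\ `|z (i + n)%N - x i| <= delta0) ->
     kappa <= (h (z j) (z j) - r) + FF g m (phi (z j)) (phi (z (j + 1 %% n)%N))) ->
  exists eps0, 0 < eps0 /\ forall eps, 0 < eps -> eps < eps0 ->
    ((kappa / 2)%:E <= mane_inf h x x eps)%E.
Proof.
move=> L0 hL hx ha hr H hphi hg hm k0 d0 Pgap.
set J : R := j%:R.
have J0 : 0 <= J by rewrite /J ler0n.
set M := Num.min delta0 (kappa / (8 * (J + 1) * L)).
have M0 : 0 < M by rewrite /M lt_min d0 /= divr_gt0 // mulr_gt0 // mulr_gt0 //; lra.
have P0 : (0 : R) < 2 ^+ j.+2 by rewrite exprn_gt0.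
exists (M / 2 ^+ j.+2); split; first by rewrite divr_gt0.
move=> eps e0 eM.
set d := 2 ^+ j.+2 * eps.
have dM : d < M by rewrite /d mulrC -ltr_pdivlMr.
have dd0 : d <= delta0 by apply: (ltW (lt_le_trans dM _)); rewrite /M ge_min lexx.
have dk : d <= kappa / (8 * (J + 1) * L) by apply: (ltW (lt_le_trans dM _)); rewrite /M ge_min lexx orbT.
have dpos : 0 < d by rewrite /d mulr_gt0.
apply: le_ereal_inf_tmp => s [n [z [hn [[hz [h1 h2]] ->]]]].
rewrite (elem_fin _ _ ha) lee_fin.
have hz' := Xset_iter n hz.
have c1 : forall i, (i <= j.+1)%N -> `|z i - x i| <= d.
  by move=> i hi; apply: dX_coord hx hz h1 hi.
have c2 : forall i, (i <= j.+1)%N -> `|z (i + n)%N - x i| <= d.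
  move=> i hi; rewrite dX_sym in h2; have := dX_coord hx hz' h2 hi.
  by rewrite iter_shift.
have c3 : forall i, (i <= j)%N -> `|z (i + n)%N - z i| <= d + d.
  move=> i hi; have := c1 i (leqW hi); have := c2 i (leqW hi).
  rewrite !ler_norml => /andP[? ?] /andP[? ?]; apply/andP; split; lra.
have [B1 B2] := err_lb (ltW L0) hL hz c3.
have W := window h z j hn.
have C := cyc_lb j hz hn hr H hphi hg hm.
have G := Pgap z n hz hn (fun i hi => conj (le_trans (c1 i hi) dd0) (le_trans (c2 i hi) dd0)).
rewrite sumrB in C; rewrite sumrB W.
rewrite -mulr_natr -/J in B1.
have hdk : d * (8 * (J + 1) * L) <= kappa.
  by rewrite -ler_pdivlMr // mulr_gt0 // mulr_gt0 //; lra.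
have Ld : 0 <= L * d by rewrite mulr_ge0 // ltW.
have LdJ : 0 <= L * d * J by rewrite mulr_ge0.
nra.
Qed.

Lemma nat_gt (y : R) : exists N : nat, y < N%:R.
Proof.
exists (Num.bound `|y|); apply: le_lt_trans (ler_norm y) _.
exact: archi_boundP.
Qed.

Lemma small_pow (eps : R) : 0 < eps -> exists K : nat, 1 / 2 ^+ K < eps.
Proof.
move=> e0; have [N hN] := nat_gt (1 / eps).
exists N.
have hN2 : (N%:R : R) <= 2 ^+ N.
  by rewrite -natrX ler_nat ltnW // ltn_expl.
have P : (0 : R) < 2 ^+ N by rewrite exprn_gt0.
rewrite ltr_pdivrMr //; rewrite ltr_pdivrMr // in hN.
nra.
Qed.

Lemma lim_le_of (f : R -> \bar R) (c : \bar R) : cvg (f @ 0^'+) ->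
  (forall e, 0 < e -> (f e <= c)%E) -> (lim (f @ 0^'+) <= c)%E.
Proof.
move=> cf H; apply: lime_le => //; apply: filterS (nbhs_right_gt 0) => e he.
exact: H.
Qed.

Lemma lim_ge_of (f : R -> \bar R) (c : \bar R) (e0 : R) : 0 < e0 -> cvg (f @ 0^'+) ->
  (forall e, 0 < e -> e < e0 -> (c <= f e)%E) -> (c <= lim (f @ 0^'+))%E.
Proof.
move=> he0 cf H; apply: lime_ge => //.
apply: filterS2 (nbhs_right_gt 0) (nbhs_right_lt he0) => e h1 h2.
exact: H.
Qed.


Definition Zc (x : nat -> R) (K m : nat) (b : R) : nat -> R :=
  fun i => if (i <= K)%N then x i else if (i <= K + m)%N then b else x (i - (K + m).+1)%N.

Lemma Zc_B (x : nat -> R) K m b (eps : R) : Xset x -> in01 b -> 0 < eps -> 1 / 2 ^+ K < eps ->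
  Bset x x (K + m).+1 eps (Zc x K m b).
Proof.
move=> hx hb e0 hK.
have hZ : Xset (Zc x K m b) by move=> i; rewrite /Zc; case: ifP => _ //; case: ifP.
split => //; split.
  apply: le_lt_trans (dX_le hx hZ _) hK => i hi.
  by rewrite /Zc (ltnW hi).
have -> : iter (K + m).+1 (@Defs.shift R) (Zc x K m b) = x.
  rewrite iter_shift; apply/funext => k; rewrite /Zc.
  have -> : (k + (K + m).+1 <= K)%N = false by apply/negbTE; rewrite -ltnNge; lia.
  have -> : (k + (K + m).+1 <= K + m)%N = false by apply/negbTE; rewrite -ltnNge; lia.
  by rewrite addnK.
by rewrite dX_refl.
Qed.

Lemma UB_oo h (x : nat -> R) (eps : R) : Xset x -> alpha h = +oo%E -> 0 < eps ->
  (mane_inf h x x eps <= (-1)%:E)%E.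
Proof.
move=> hx ha e0; have [K hK] := small_pow e0.
have hb : in01 (0 : R) by rewrite /in01 lexx ler01.
set z := Zc x K 0 0.
have H : (mane_inf h x x eps <= \sum_(0 <= i < (K + 0).+1) ((phi_of h (iter i (@Defs.shift R) z))%:E - alpha h))%E.
  by apply: ereal_inf_lbound; exists (K + 0).+1, z; split => //; split => //; exact: Zc_B.
apply: le_trans H _; rewrite ha big_nat_recl //=.
by rewrite addeNy addNye leNye.
Qed.

Lemma UB_moo h (x : nat -> R) (eps : R) : alpha h = -oo%E ->
  (1%:E <= mane_inf h x x eps)%E.
Proof.
move=> ha; apply: le_ereal_inf_tmp => s [n [z [hn [_ ->]]]].
rewrite ha; move: hn; case: n => [//|n] _; rewrite big_nat_recl //=.
rewrite addey // addye ?leey //.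
have : (0 <= \sum_(0 <= i < n) ((phi_of h (iter i.+1 (@Defs.shift R) z))%:E - -oo))%E.
  by apply: sume_ge0 => i _ /=; rewrite addey // le0y.
by case: (\sum_(0 <= i < n) _)%E.
Qed.


Lemma UB_neg h (L : R) (x : nat -> R) (r b eps : R) : 0 < L -> lipH h L -> Xset x ->
  alpha h = r%:E -> in01 b -> h b b < r -> 0 < eps ->
  (mane_inf h x x eps <= (-1)%:E)%E.
Proof.
move=> L0 hL hx ha hb hbr e0; have [K hK] := small_pow e0.
have i0 : in01 (0 : R) by rewrite /in01 lexx ler01.
set B := h 0 0 + 2 * L - r.
have hB : forall a c, in01 a -> in01 c -> h a c - r <= B.
  move=> a c ha' hc; have := hL a c 0 0 ha' hc i0 i0.
  rewrite !subr0 ler_norml => /andP[_ h2].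
  move: ha' hc => /andP[a0 a1] /andP[c0 c1].
  rewrite !ger0_norm // in h2; rewrite /B; nra.
set db := r - h b b.
have db0 : 0 < db by rewrite /db; lra.
have [N hN] := nat_gt (((K.+2)%:R * `|B| + 1) / db).
set m := N.+1.
set z := Zc x K m b.
have hz : Xset z by move=> i; rewrite /z /Zc; case: ifP => _; [exact: hx|case: ifP => _ //].
have H : (mane_inf h x x eps <= \sum_(0 <= i < (K + m).+1) ((phi_of h (iter i (@Defs.shift R) z))%:E - alpha h))%E.
  by apply: ereal_inf_lbound; exists (K + m).+1, z; split => //; split => //; exact: Zc_B.
apply: le_trans H _; rewrite (elem_fin _ _ ha) lee_fin.
rewrite (big_cat_nat _ (n := K.+1)) //=; last by rewrite /m; lia.
rewrite (big_cat_nat _ (n := (K + m)%N) (m := K.+1)) //=; last by rewrite /m; lia.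
rewrite big_nat1.
have p1 : \sum_(0 <= i < K.+1) (h (z i) (z i.+1) - r) <= B *+ K.+1.
  rewrite -[in X in _ <= X](subn0 K.+1) -sumr_const_nat; apply: ler_sum_nat => i _.
  by apply: hB; apply: hz.
have p2 : \sum_(K.+1 <= i < K + m) (h (z i) (z i.+1) - r) = (h b b - r) *+ N.
  rewrite -[N in RHS](_ : (K + m - K.+1)%N = N); last by rewrite /m; lia.
  rewrite -sumr_const_nat; apply: eq_big_nat => i /andP[h1 h2].
  rewrite /z /Zc.
  have -> : (i <= K)%N = false by apply/negbTE; rewrite -ltnNge.
  have -> : (i.+1 <= K)%N = false by apply/negbTE; rewrite -ltnNge; lia.
  have -> : (i <= K + m)%N = true by lia.
  by have -> : (i.+1 <= K + m)%N = true by lia.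
have p3 := hB (z (K + m)%N) (z (K + m).+1) (hz _) (hz _).
rewrite p2 -mulr_natr; rewrite -mulr_natr in p1.
rewrite ltr_pdivrMr // in hN.
have nB := ler_norm B.
have Bn : 0 <= `|B| by [].
have KB : B * (K.+1)%:R <= `|B| * (K.+1)%:R by rewrite ler_wpM2r.
rewrite -/db.
have e1 : (K.+2)%:R * `|B| = (K.+1)%:R * `|B| + `|B| :> R by rewrite -natr1; ring.
have e2 : (h b b - r) * N%:R = - (N%:R * db) by rewrite /db; ring.
rewrite e2; lra.
Qed.

End PartC.

Section PartM.
Variable R : realType.
Implicit Types h : R -> R -> R.

Lemma gap_contra h (L : R) (x : nat -> R) (r : R) j g (phi : R -> R) :
  0 < L -> lipH h L -> Xset x -> alpha h = r%:E -> (forall b, in01 b -> r <= h b b) -> H3 g ->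
  (forall u, in01 u -> in01 (phi u)) -> (forall u v, h u v = g (phi u) (phi v)) ->
  (forall a b, `|phi a - phi b| = `|a - b|) -> phi (x j) < phi (x j.+1) ->
  (0 < lim (mane_inf h x x @ 0^'+))%E.
Proof.
move=> L0 hL hx ha hr H hphi hg hiso huv.
set u := phi (x j); set v := phi (x j.+1).
have u01 : in01 u by apply: hphi; exact: hx.
have v01 : in01 v by apply: hphi; exact: hx.
set m := (u + v) / 2.
have m01 : in01 m by move: u01 v01 => /andP[? ?] /andP[? ?]; apply/andP; rewrite /m; split; lra.
set kappa := DD g (u + (v - u) / 4) m m (v - (v - u) / 4).
have k0 : 0 < kappa by exact: gap_pos.
have d0 : 0 < (v - u) / 4 by rewrite divr_gt0 // subr_gt0.
have Pgap : forall (z : nat -> R) n, Xset z -> (0 < n)%N ->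
     (forall i, (i <= j.+1)%N -> `|z i - x i| <= (v - u) / 4 /\ `|z (i + n)%N - x i| <= (v - u) / 4) ->
     kappa <= (h (z j) (z j) - r) + FF g m (phi (z j)) (phi (z (j + 1 %% n)%N)).
  move=> z n hz hn hc.
move: hn hc; case: n => [//|[|n]] _ hc.
  exfalso.
  have [h1 _] := hc j.+1 (leqnn _).
  have [_ h2] := hc j (leqnSn _).
  rewrite addn1 in h2.
  have := hiso (x j.+1) (x j); rewrite -/u -/v.
  move: h1 h2; rewrite !ler_norml => /andP[? ?] /andP[? ?].
  have : `|x j.+1 - x j| <= (v - u) / 2 by rewrite ler_norml; apply/andP; split; lra.
  move=> hle he; rewrite -he gtr0_norm in hle; lra.
rewrite modn_small // addn1.
have hz0 := hr (z j) (hz j).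
have [c0 _] := hc j (leqnSn _).
have [c1 _] := hc j.+1 (leqnn _).
have := gap_mono (c0 := phi (z j)) (c1 := phi (z j.+1)) H u01 v01 (hphi _ (hz _)) (hphi _ (hz _)) huv.
rewrite /u /v !hiso => /(_ c0 c1); rewrite -/u -/v -/m -/kappa; lra.
have [eps0 [e0 Heps]] := LB L0 hL hx ha hr H hphi hg m01 k0 d0 Pgap.
have hl := lim_ge_of e0 (@mane_cvg R h x x) Heps.
apply: (lt_le_trans _ hl); rewrite lte_fin; lra.
Qed.


Lemma const_contra h (L : R) (x : nat -> R) (r a : R) :
  0 < L -> lipH h L -> Xset x -> alpha h = r%:E -> (forall b, in01 b -> r <= h b b) -> H3 h ->
  x = (fun _ => a) -> r < h a a -> (0 < lim (mane_inf h x x @ 0^'+))%E.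
Proof.
move=> L0 hL hx ha hr H xa har.
have a01 : in01 a by have := hx 0%N; rewrite xa.
have i0 : in01 (0 : R) by rewrite /in01 lexx ler01.
set kappa := (h a a - r) / 2.
have k0 : 0 < kappa by rewrite /kappa; lra.
set d0 := (h a a - r) / (4 * L).
have d00 : 0 < d0 by rewrite /d0 divr_gt0 // ?subr_gt0 // mulr_gt0.
have Pgap : forall (z : nat -> R) n, Xset z -> (0 < n)%N ->
     (forall i, (i <= 1)%N -> `|z i - x i| <= d0 /\ `|z (i + n)%N - x i| <= d0) ->
     kappa <= (h (z 0%N) (z 0%N) - r) + FF h 0 (id (z 0%N)) (id (z (0 + 1 %% n)%N)).
  move=> z n hz hn hc.
  have [c0 _] := hc 0%N isT; rewrite xa in c0.
  have hF := FF_ge0 (m := 0) (a := z 0%N) (b := z (0 + 1 %% n)%N) H i0 (hz _) (hz _).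
  have hl := hL (z 0%N) (z 0%N) a a (hz _) (hz _) a01 a01.
  have : L * (`|z 0%N - a| + `|z 0%N - a|) <= L * (d0 + d0) by apply: ler_wpM2l; [exact: ltW|exact: lerD].
  have e : L * (d0 + d0) = (h a a - r) / 2 by rewrite /d0; field; lra.
  rewrite e; move: hl; rewrite ler_norml => /andP[h1 h2] h3.
  rewrite /kappa /=; lra.
have [eps0 [e0 Heps]] := LB (g := h) (phi := id) L0 hL hx ha hr H (fun u hu => hu) (fun u v => erefl) i0 k0 d00 Pgap.
have hl := lim_ge_of e0 (@mane_cvg R h x x) Heps.
apply: (lt_le_trans _ hl); rewrite lte_fin; lra.
Qed.

End PartM.

Unset Implicit Arguments.
Unset Strict Implicit.

Theorem lemma3p3 (R : realType) (h : R -> R -> R) (x : nat -> R) :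
  classH h -> shift_periodic x -> aubry h x ->
  exists a : R, m_h h a /\ x = (fun _ => a).
Proof.
move=> [[L0 hL0] [H3h _]] _ [hx hm].
set L := `|L0| + 1.
have Lp : 0 < L by rewrite /L ltr_pwDr.
have hL : lipH h L.
  move=> a b c d ha hb hc hd; apply: le_trans (hL0 a b c d ha hb hc hd) _.
  apply: ler_wpM2r; first by rewrite addr_ge0.
  by apply: le_trans (ler_norm L0) _; rewrite /L lerDl.
have cv := @mane_cvg R h x x.
rewrite /mane in hm.
case Ea : (alpha h) => [r| |].
- case: (pselect (exists b, in01 b /\ h b b < r)) => [[b [hb hbr]]|nob].
    have := lim_le_of cv (fun e he => UB_neg Lp hL hx Ea hb hbr he).
    by rewrite hm lee_fin; lra.
  have hr : forall b, in01 b -> r <= h b b.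
    by move=> b hb; rewrite leNgt; apply/negP => hlt; apply: nob; exists b.
  case: (pselect (exists j, x j != x j.+1)) => [[j hj]|noj].
    exfalso; case: (ltgtP (x j) (x j.+1)) => hlt.
    + have := gap_contra (g := h) (phi := id) (j := j) Lp hL hx Ea hr H3h (fun u hu => hu) (fun u v => erefl)
         (fun a b => erefl) hlt.
      by rewrite hm ltxx.
    + have i01 : forall a : R, in01 a -> in01 (1 - a).
        by move=> a /andP[? ?]; apply/andP; split; lra.
      have hg : forall u v, h u v = (fun a b => h (1 - a) (1 - b)) (1 - u) (1 - v).
        by move=> u v /=; rewrite !subKr.
      have hiso : forall a b : R, `|(1 - a) - (1 - b)| = `|a - b|.
        by move=> a b; rewrite (_ : (1 - a) - (1 - b) = b - a); [exact: distrC | ring].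
      have hlt' : 1 - x j < 1 - x j.+1 by lra.
      have := gap_contra (g := fun a b => h (1 - a) (1 - b)) (phi := fun a => 1 - a) (j := j) Lp hL hx Ea hr (H3_refl H3h) i01 hg hiso hlt'.
      by rewrite hm ltxx.
    + by rewrite hlt eqxx in hj.
  have xc : x = (fun _ => x 0%N).
    apply/funext; elim => [//|k IH]; rewrite -IH.
    by case: (eqVneq (x k) (x k.+1)) => [->|hne] //; exfalso; apply: noj; exists k.
  case: (leP (h (x 0%N) (x 0%N)) r) => har.
    exists (x 0%N); split => //; split; first exact: hx.
    set S := [set h a a | a in [set a : R | 0 <= a <= 1]].
    have hS : S (h (x 0%N) (x 0%N)) by exists (x 0%N) => //; exact: hx.
    apply/eqP; rewrite eq_le; apply/andP; split.
      apply: lb_le_inf; first by exists (h (x 0%N) (x 0%N)).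
      move=> _ [b hb <-]; apply: le_trans har _; exact: hr.
    apply: ge_inf => //; exists r => _ [b hb <-]; exact: hr.
  have := const_contra Lp hL hx Ea hr H3h xc har.
  by rewrite hm ltxx.
- have := lim_le_of cv (fun e he => UB_oo hx Ea he).
  by rewrite hm lee_fin; lra.
- have := lim_ge_of ltr01 cv (fun e _ _ => @UB_moo R h x e Ea).
  by rewrite hm lee_fin; lra.
Qed.
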